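(* Let $\widehat H:[0,T]\times\mathbb{R}^n\times\mathbb{R}^n\to\mathbb{R}$ and $\widehat\sigma:\mathbb{R}^n\to\mathbb{R}$ be such that $H(t,x(\cdot),s)=\widehat H(t,x(t),s)$ and $\sigma(x(\cdot))=\widehat\sigma(x(T))$ satisfy (B.1), (B.2), (B.3), with $c$ the constant of (B.2). Let $\widehat\varphi:[0,T]\times\mathbb{R}^n\to\mathbb{R}$ be a continuous function with $\widehat\varphi(T,x)=\widehat\sigma(x)$ for all $x\in\mathbb{R}^n$ and the property: for every $(t,x)\in[0,T)\times\mathbb{R}^n$ and $s\in\mathbb{R}^n$ there is a Lipschitz $y:[t,T]\to\mathbb{R}^n$ with $y(t)=x$, $\|\dot y(\tau)\|\le c(1+\|y(\tau)\|)$ for a.e. $\tau\in[t,T]$, and $\widehat\varphi(\tau,y(\tau))-\widehat\varphi(t,x)=\langle s,y(\tau)-x\rangle-\int_t^\tau\widehat H(\xi,y(\xi),s)\,d\xi$ for all $\tau\in[t,T]$ (i.e. $\widehat\varphi$ is the minimax solution of $\partial_t\widehat\varphi+\widehat H(t,x,\nabla_x\widehat\varphi)=0$, $\widehat\varphi(T,\cdot)=\widehat\sigma$). Then the minimax solution of the path-dependent problem $\partial_t\varphi+H(t,x(\cdot),\nabla\varphi)=0$, $\varphi(T,x(\cdot))=\sigma(x(\cdot))$ coincides with the functional $\varphi(t,x(\cdot))=\widehat\varphi(t,x(t))$, $(t,x(\cdot))\in[0,T]\times C([-h,T],\mathbb{R}^n)$.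
   Context: Fix $n\in\mathbb{N}$, $h>0$, $T>0$; $\langle\cdot,\cdot\rangle$, $\|\cdot\|$ Euclidean. $C([-h,T],\mathbb{R}^n)$ has the sup norm $\|\cdot\|_{[-h,T]}$; $[0,T]\times C([-h,T],\mathbb{R}^n)$ has the metric $|t-\tau|+\|x(\cdot)-y(\cdot)\|_{[-h,T]}$. Non-anticipative: $\varphi(t,x(\cdot))=\varphi(t,y(\cdot))$ whenever $t\in[0,T)$ and $x=y$ on $[-h,t]$. $\mathrm{Lip}(t,x(\cdot))$: the $y(\cdot)\in C([-h,T],\mathbb{R}^n)$ with $y=x$ on $[-h,t]$, Lipschitz on $[t,T]$. (B.1) $H,\sigma$ continuous; (B.2) there is $c>0$ with $|H(t,x(\cdot),s)-H(t,x(\cdot),r)|\le c(1+\max_{\tau\in[-h,t]}\|x(\tau)\|)\|s-r\|$ for all $t,x(\cdot),s,r$; (B.3) for every compact $D\subset C([-h,T],\mathbb{R}^n)$ there is $\lambda>0$ with $|H(t,x(\cdot),s)-H(t,y(\cdot),s)|\le\lambda(1+\|s\|)\max_{\tau\in[-h,t]}\|x(\tau)-y(\tau)\|$ for all $t\in[0,T]$, $x(\cdot),y(\cdot)\in D$, $s$. $Y(t,x(\cdot))$: the $y(\cdot)\in\mathrm{Lip}(t,x(\cdot))$ with $\|\dot y(\tau)\|\le c(1+\max_{\xi\in[-h,\tau]}\|y(\xi)\|)$ for a.e. $\tau\in[t,T]$. A minimax solution: $\varphi$ non-anticipative, continuous, $\varphi(T,\cdot)=\sigma$, and for every $(t,x(\cdot))\in[0,T)\times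 C([-h,T],\mathbb{R}^n)$, $s\in\mathbb{R}^n$ there is $y(\cdot)\in Y(t,x(\cdot))$ with $\varphi(\tau,y(\cdot))-\varphi(t,x(\cdot))=\langle s,y(\tau)-x(t)\rangle-\int_t^\tau H(\xi,y(\cdot),s)\,d\xi$ for all $\tau\in[t,T]$. Under (B.1)–(B.3) it exists and is unique. *)

(* Defs.v *)
From HB Require Import structures.
From mathcomp Require Import all_boot all_order all_algebra.
From mathcomp Require Import all_classical all_reals all_analysis.
Set Implicit Arguments. Unset Strict Implicit. Unset Printing Implicit Defensive.
Import Order.TTheory GRing.Theory Num.Theory.
Import numFieldNormedType.Exports.
Local Open Scope classical_set_scope.
Local Open Scope ring_scope.

Section Defs.
Variables (R : realType) (n : nat).

Notation vec := 'rV[R]_n.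
(* paths: functions R -> R^n, only their restriction to [-h,T] matters *)
Notation path := (R -> vec).

Definition dotp (u v : vec) : R := \sum_(i < n) u ord0 i * v ord0 i.
Definition enorm (u : vec) : R := Num.sqrt (dotp u u).

(* max_{xi in [a,b]} ||x(xi)|| (a maximum for continuous x, written as sup) *)
Definition pmax (x : path) (a b : R) : R :=
  sup [set enorm (x xi) | xi in `[a, b]].

Definition isC (h T : R) (x : path) : Prop := {within `[- h, T], continuous x}.

Definition cont_functional (h T : R) (phi : R -> path -> R) : Prop :=
  forall t x, t \in `[0, T] -> isC h T x ->
  forall eps : R, 0 < eps -> exists2 del : R, 0 < del &
    forall t' y, t' \in `[0, T] -> isC h T y ->
      `|t - t'| + pmax (fun xi => x xi - y xi) (- h) T < del ->
      `|phi t x - phi t' y| < eps.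

Definition cont_H (h T : R) (H : R -> path -> vec -> R) : Prop :=
  forall t x s, t \in `[0, T] -> isC h T x ->
  forall eps : R, 0 < eps -> exists2 del : R, 0 < del &
    forall t' y r, t' \in `[0, T] -> isC h T y ->
      `|t - t'| + pmax (fun xi => x xi - y xi) (- h) T + enorm (s - r) < del ->
      `|H t x s - H t' y r| < eps.

Definition cont_sigma (h T : R) (sigma : path -> R) : Prop :=
  forall x, isC h T x ->
  forall eps : R, 0 < eps -> exists2 del : R, 0 < del &
    forall y, isC h T y -> pmax (fun xi => x xi - y xi) (- h) T < del ->
      `|sigma x - sigma y| < eps.

Definition B1 (h T : R) H sigma := cont_H h T H /\ cont_sigma h T sigma.

Definition B2 (h T : R) (H : R -> path -> vec -> R) (c : R) : Prop :=
  forall t x s r, t \in `[0, T] -> isC h T x ->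
    `|H t x s - H t x r| <= c * (1 + pmax x (- h) t) * enorm (s - r).

(* compactness of D in C([-h,T],R^n) with the sup norm: compact subset of the
   space of functions with the topology of uniform convergence on [-h,T] *)
Definition B3 (h T : R) (H : R -> path -> vec -> R) : Prop :=
  forall D : set path, D `<=` isC h T ->
    compact (D : set {uniform` `[- h, T] -> vec}) ->
    exists2 lam : R, 0 < lam &
      forall t x y s, t \in `[0, T] -> D x -> D y ->
        `|H t x s - H t y s| <=
          lam * (1 + enorm s) * pmax (fun xi => x xi - y xi) (- h) t.

Definition nonanticipative (h T : R) (phi : R -> path -> R) : Prop :=
  forall t x y, t \in `[0, T[ -> isC h T x -> isC h T y ->
    {in `[- h, t], x =1 y} -> phi t x = phi t y.

Definition Lip (h T t : R) (x y : path) : Prop :=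
  isC h T y /\ {in `[- h, t], y =1 x} /\
  exists L : R, forall a b, a \in `[t, T] -> b \in `[t, T] ->
    enorm (y a - y b) <= L * `|a - b|.

Definition Yset (h T c t : R) (x y : path) : Prop :=
  Lip h T t x y /\
  {ae (@lebesgue_measure R), forall tau, tau \in `[t, T] ->
     derivable y tau 1 /\ enorm ('D_1 y tau) <= c * (1 + pmax y (- h) tau)}.

Definition minimax (h T c : R) (H : R -> path -> vec -> R) (sigma : path -> R)
  (phi : R -> path -> R) : Prop :=
  [/\ nonanticipative h T phi, cont_functional h T phi,
      (forall x, isC h T x -> phi T x = sigma x) &
      forall t x s, t \in `[0, T[ -> isC h T x ->
        exists2 y, Yset h T c t x y &
          forall tau, tau \in `[t, T] ->
            phi tau y - phi t x =
              dotp s (y tau - x t) - Rintegral (@lebesgue_measure R) `[t, tau]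
                                       (fun xi => H xi y s)].

Definition minimax_hat (T c : R) (Hh : R -> vec -> vec -> R) (sigh : vec -> R)
  (phih : R -> vec -> R) : Prop :=
  [/\ {within `[0, T] `*` [set: vec], continuous (fun p : R * vec => phih p.1 p.2)},
      (forall x, phih T x = sigh x) &
      forall t x s, t \in `[0, T[ ->
        exists y : R -> vec,
          [/\ (exists L : R, forall a b, a \in `[t, T] -> b \in `[t, T] ->
                 enorm (y a - y b) <= L * `|a - b|),
              y t = x,
              {ae (@lebesgue_measure R), forall tau, tau \in `[t, T] ->
                 derivable y tau 1 /\ enorm ('D_1 y tau) <= c * (1 + enorm (y tau))} &
              forall tau, tau \in `[t, T] ->
                phih tau (y tau) - phih t x =
                  dotp s (y tau - x) - Rintegral (@lebesgue_measure R) `[t, tau]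
                                         (fun xi => Hh xi (y xi) s)]].

End Defs.

(* Main.v *)
Require Import Defs.
From HB Require Import structures.
From mathcomp Require Import all_boot all_order all_algebra.
From mathcomp Require Import all_classical all_reals all_analysis.
From mathcomp Require Import lra.
Import Order.TTheory GRing.Theory Num.Theory.
Import numFieldNormedType.Exports.
Local Open Scope classical_set_scope.
Local Open Scope ring_scope.

Lemma cont_within_eps (K : numFieldType) (U V : normedModType K) (A : set U) (f : U -> V) :
  {within A, continuous f} <-> forall x, A x -> forall e, 0 < e -> exists2 d, 0 < d & forall y, A y -> `|x - y| < d -> `|f x - f y| < e.
Proof.
split.
- move=> /subspace_continuousP cf x Ax e e0.
  have := cf x Ax; move/cvgrPdist_lt/(_ e e0); rewrite near_withinE.
  move/nbhs_normP => [d d0 H]; exists d => // y Ay xy.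
  exact: (H y).
- move=> H; apply/subspace_continuousP => x Ax; apply/cvgrPdist_lt => e e0.
  rewrite near_withinE; apply/nbhs_normP.
  have [d d0 Hd] := H x Ax e e0; exists d => //= y xy Ay; exact: Hd.
Qed.
Arguments cont_within_eps {K U V A f}.

Lemma absle_pos (R : realType) (u v : R) : 0 <= u -> u <= v -> `|u| <= `|v|.
Proof. move=> u0 uv; rewrite !ger0_norm //; lra. Qed.
Lemma absle_neg (R : realType) (u v : R) : u <= 0 -> v <= u -> `|u| <= `|v|.
Proof. move=> u0 uv; rewrite !ler0_norm //; lra. Qed.

Section N.
Variables (R : realType) (n : nat).

Lemma coord_le_norm (u : 'rV[R]_n) i : `|u ord0 i| <= `|u|.
Proof.
rewrite -[X in _ <= X]/(mx_norm u) mx_normrE.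
exact: (le_bigmax _ _ (ord0, i)).
Qed.

Lemma dotp_ge0 (u : 'rV[R]_n) : 0 <= dotp u u.
Proof. by rewrite /dotp; apply: sumr_ge0 => i _; by rewrite -expr2 sqr_ge0. Qed.

Lemma enorm_ge0 (u : 'rV[R]_n) : 0 <= enorm u.
Proof. exact: sqrtr_ge0. Qed.

Lemma norm_le_enorm (u : 'rV[R]_n) : `|u| <= enorm u.
Proof.
rewrite -[X in X <= _]/(mx_norm u) mx_normrE.
apply: bigmax_le; first exact: enorm_ge0.
move=> [i j] _ /=; rewrite (ord1 i).
rewrite /enorm -(sqrtr_sqr (u ord0 j)) ler_sqrt; last exact: dotp_ge0.
rewrite /dotp (bigD1 j) //= -expr2 lerDl.
by apply: sumr_ge0 => k _; by rewrite -expr2 sqr_ge0.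
Qed.

Lemma enorm_le (u : 'rV[R]_n) M : `|u| <= M -> enorm u <= Num.sqrt (n%:R * M ^+ 2).
Proof.
move=> uM; rewrite /enorm ler_wsqrtr // /dotp.
rewrite mulr_natl -[n in _ *+ n]card_ord -sumr_const.
apply: ler_sum => i _; rewrite -expr2 -real_normK ?num_real //.
rewrite lerXn2r ?nnegrE //; last exact: le_trans (coord_le_norm u i) uM.
by apply: le_trans uM.
Qed.

Lemma pmax_ub (f : R -> 'rV[R]_n) a b xi :
  {within `[a, b], continuous f} -> xi \in `[a, b] -> enorm (f xi) <= pmax f a b.
Proof.
move=> cf xiab.
have bnd := compact_bounded (continuous_compact cf (@segment_compact _ a b)).
move: bnd => [M0 [M0r HM0]]. have ltrDl_ok : M0 < M0 + 1 by rewrite ltrDl. have HM := HM0 (M0 + 1) ltrDl_ok. set M := M0 + 1.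
apply: ub_le_sup; last by exists xi.
exists (Num.sqrt (n%:R * M ^+ 2)) => _ [z zab <-].
by apply: enorm_le; apply: HM; exists z.
Qed.

Lemma pmax_ge0 (f : R -> 'rV[R]_n) a b :
  a <= b -> {within `[a, b], continuous f} -> 0 <= pmax f a b.
Proof.
move=> ab cf; apply: (le_trans (enorm_ge0 (f a))); apply: pmax_ub cf _.
by rewrite in_itv /= lexx ab.
Qed.
End N.

Theorem proposition8 (R : realType) (n : nat) (h T c : R)
  (Hh : R -> 'rV[R]_n -> 'rV[R]_n -> R) (sigh : 'rV[R]_n -> R)
  (phih : R -> 'rV[R]_n -> R) :
  0 < h -> 0 < T -> 0 < c ->
  let H := fun (t : R) (x : R -> 'rV[R]_n) (s : 'rV[R]_n) => Hh t (x t) s in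
  let sigma := fun x : R -> 'rV[R]_n => sigh (x T) in
  B1 h T H sigma -> B2 h T H c -> B3 h T H ->
  minimax_hat T c Hh sigh phih ->
  minimax h T c H sigma (fun (t : R) (x : R -> 'rV[R]_n) => phih t (x t)).
Proof.
move=> h0 T0 c0 H sigma _ _ _ [cphi phiT hyp]; split.
- move=> t x y; rewrite in_itv /= => /andP[t0 tT] _ _ xy.
  by rewrite xy // in_itv /= lexx andbT; lra.
- move=> t x tT cx e e0.
  have tA : (`[0, T] `*` [set: 'rV[R]_n]) (t, x t).
    by split => //=.
  have [e1 e10 He1] := cont_within_eps.1 cphi (t, x t) tA e e0.
  have tT' : `[- h, T]%classic t.
    move: tT; rewrite /= !in_itv /= => /andP[t0 ->]; rewrite andbT; lra.
  have [d2 d20 Hd2] := cont_within_eps.1 cx t tT' (e1 / 2) ltac:(by rewrite divr_gt0).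
  exists (Num.min (Num.min e1 d2) (e1 / 2)).
    by rewrite !lt_min e10 d20 divr_gt0.
  move=> t' y t'T cy.
  have cxy : isC h T (fun xi => x xi - y xi).
    apply/cont_within_eps => z zA e' e'0.
    have [a a0 Ha] := cont_within_eps.1 cx z zA (e' / 2) ltac:(by rewrite divr_gt0).
    have [b b0 Hb] := cont_within_eps.1 cy z zA (e' / 2) ltac:(by rewrite divr_gt0).
    exists (Num.min a b); first by rewrite lt_min a0 b0.
    move=> w wA; rewrite lt_min => /andP[za zb].
    have := Ha w wA za; have := Hb w wA zb.
    have := ler_normD (x z - x w) (y w - y z).
    rewrite (_ : x z - y z - (x w - y w) = (x z - x w) + (y w - y z)); last by rewrite opprB addrACA [RHS]addrACA [- x w + _]addrC.
    rewrite (distrC (y w)); lra.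
  have pm0 : 0 <= pmax (fun xi => x xi - y xi) (- h) T.
    by apply: pmax_ge0 => //; lra.
  have t'A : `[- h, T]%classic t'.
    move: t'T; rewrite /= !in_itv /= => /andP[t0 ->]; rewrite andbT; lra.
  have ub := @pmax_ub _ _ _ _ _ t' cxy t'A.
  have := @norm_le_enorm _ _ (x t' - y t').
  rewrite !lt_min => Hn /andP[/andP[Hd1 Hd2'] Hd3].
  have nn := normr_ge0 (t - t').
  have Htt : `|t - t'| < e1 by lra.
  have Htt2 : `|t - t'| < d2 by lra.
  have Hp : pmax (fun xi => x xi - y xi) (- h) T < e1 / 2 by lra.
  have Hx := Hd2 t' t'A Htt2.
  apply: (He1 (t', y t')); first by split.
  rewrite prod_normE /= gt_max Htt /=.
  have -> : x t - y t' = (x t - x t') + (x t' - y t') by rewrite addrA subrK.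
  apply: le_lt_trans (ler_normD _ _) _.
  have : `|x t' - y t'| < e1 / 2 by lra.
  lra.
- by move=> x _; rewrite phiT.
- move=> t x s tT cx.
  have [y [[L HL] yt ae yeq]] := hyp t (x t) s tT.
  move: tT; rewrite in_itv /= => /andP[t0 tT].
  pose Y := fun xi => if xi <= t then x xi else y xi.
  have Yy : forall a, t <= a -> Y a = y a.
    move=> a ta; rewrite /Y; case: ifP => // at'.
    by have -> : a = t by apply/le_anti; rewrite at' ta.
  have HL' : forall a b, a \in `[t, T] -> b \in `[t, T] -> `|y a - y b| <= (`|L| + 1) * `|a - b|.
    move=> a b aT bT; apply: (le_trans (@norm_le_enorm _ _ _)).
    apply: (le_trans (HL a b aT bT)); apply: ler_wpM2r => //.
    by apply: (le_trans (ler_norm L)); rewrite lerDl.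
  have YC : isC h T Y.
    apply/cont_within_eps => xi xiA e e0.
    have tA : `[- h, T]%classic t by rewrite /= in_itv /=; apply/andP; split; lra.
    move: (xiA); rewrite /= in_itv /= => /andP[hxi xiT].
    have [d1 d10 Hd1] := cont_within_eps.1 cx xi xiA (e/2) ltac:(by rewrite divr_gt0).
    have [d2 d20 Hd2] := cont_within_eps.1 cx t tA (e/2) ltac:(by rewrite divr_gt0).
    have K0 : 0 < `|L| + 1 by rewrite ltr_pwDr.
    exists (Num.min (Num.min d1 d2) (e / 2 / (`|L| + 1))).
      by rewrite !lt_min d10 d20 !divr_gt0.
    move=> z zA; rewrite !lt_min => /andP[/andP[z1 z2] z3].
    move: (zA); rewrite /= in_itv /= => /andP[hz zT].
    have HK : (`|L| + 1) * `|xi - z| < e / 2 by rewrite mulrC -ltr_pdivlMr.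
    have KK : forall a b, t <= a -> a <= T -> t <= b -> b <= T -> `|a - b| <= `|xi - z| ->
        `|y a - y b| < e / 2.
      move=> a b ta aT tb bT ab.
      apply: le_lt_trans HK; apply: le_trans (HL' a b _ _) _.
      - by rewrite in_itv /= ta aT.
      - by rewrite in_itv /= tb bT.
      by apply: ler_wpM2l => //; exact: ltW.
    have nx := normr_ge0 (xi - z).
    rewrite /Y; case: (leP xi t) => xit; case: (leP z t) => zt.
    - by apply: lt_le_trans (Hd1 z zA z1) _; lra.
    - have -> : x xi - y z = (x xi - x t) + (y t - y z) by rewrite yt addrA subrK.
      apply: le_lt_trans (ler_normD _ _) _.
      have a1 : `|xi - t| <= `|xi - z| by apply: absle_neg; lra.
      have := Hd1 t tA ltac:(lra).
      have := KK t z (lexx _) ltac:(lra) ltac:(lra) zT ltac:(by rewrite distrC (distrC xi); apply: absle_pos; lra).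
      lra.
    - have -> : y xi - x z = (y xi - y t) + (x t - x z) by rewrite -yt addrA subrK.
      apply: le_lt_trans (ler_normD _ _) _.
      have a1 : `|t - z| <= `|xi - z| by apply: absle_pos; lra.
      have := Hd2 z zA ltac:(lra).
      have := KK xi t ltac:(lra) xiT (lexx _) ltac:(lra) ltac:(by apply: absle_pos; lra).
      lra.
    - have := KK xi z ltac:(lra) xiT ltac:(lra) zT (lexx _); lra.
  exists Y.
    split; first split => //.
      split; first by move=> xi; rewrite in_itv /= => /andP[_ xit]; rewrite /Y xit.
      exists L => a b aT bT.
      move: (aT) (bT); rewrite !in_itv /= => /andP[ta _] /andP[tb _].
      by rewrite !Yy //; exact: HL.
    have ne : almost_everywhere (@lebesgue_measure R) (fun tau => tau != t).
      exists [set t]; split; [exact: measurable_set1 | exact: lebesgue_measure_set1 |].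
      by move=> z /= /negP; rewrite negbK => /eqP.
    apply: (@filterS2 _ _ (ae_filter_ringOfSetsType (@lebesgue_measure R)) _ _ _ _ ae ne) => tau Hy tne tauT.
    move: (tauT); rewrite in_itv /= => /andP[ttau' tauT'].
    have ttau : t < tau by rewrite lt_neqAle eq_sym tne ttau'.
    have nr : \forall z \near tau, Y z = y z.
      apply/nbhs_normP; exists (tau - t); first by rewrite /=; lra.
      move=> z /= hz; apply: Yy; have := ler_norm (tau - z); lra.
    have [dy bd] := Hy tauT.
    split.
      apply: (near_eq_derivable _ dy); apply: filterS nr => z /esym //.
    rewrite (@near_eq_derive _ _ _ Y y tau 1 nr).
    apply: (le_trans bd); apply: ler_wpM2l; first exact: ltW.
    rewrite lerD2l -Yy //; apply: pmax_ub.
      apply: continuous_subspaceW YC => z /=; rewrite !in_itv /= => /andP[-> zt] /=; lra.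
    rewrite in_itv /= lexx andbT; lra.
  move=> tau tauT; move: (tauT); rewrite in_itv /= => /andP[ttau tauT'].
  rewrite /= Yy // yeq //; congr (_ - _).
  apply: eq_Rintegral => xi; rewrite inE /= in_itv /= => /andP[txi _].
  by rewrite /H Yy.
Qed.
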